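(* Let $G$ be a graph. If some graph in the LC orbit $[G]$ contains a clique of size $k\ge 1$, then $\lambda(G)\ge k-1$. Equivalently, every graph in $[G]$ has clique number at most $\lambda(G)+1$.
   Context: All graphs are finite, simple and undirected. For a graph $G=(V,E)$ and $v\in V$, let $N_v$ be the neighbourhood of $v$; the local complementation $G^v$ is obtained by complementing the subgraph induced on $N_v$. The LC orbit $[G]$ is the set of graphs obtainable from $G$ by finite sequences of local complementations. $\alpha(G)$ is the independence number of $G$ and $\lambda(G)=\max_{H\in[G]}\alpha(H)$. *)

(* Defs.v *)
From mathcomp Require Import all_boot.
Set Implicit Arguments. Unset Strict Implicit. Unset Printing Implicit Defensive.

(* A graph on the finite vertex type T, given by its adjacency (edge) indicator
   on ordered pairs.  It is a finite simple undirected graph when [simple g]. *)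
Definition graph (T : finType) := {ffun T * T -> bool}.

Definition adj (T : finType) (g : graph T) (x y : T) : bool := g (x, y).

Definition simple (T : finType) (g : graph T) : Prop :=
  (forall x, ~~ adj g x x) /\ (forall x y, adj g x y = adj g y x).

Definition nbhd (T : finType) (g : graph T) (v : T) : {set T} :=
  [set x | adj g v x].

Definition lc (T : finType) (g : graph T) (v : T) : graph T :=
  [ffun p : T * T =>
     if [&& p.1 != p.2, p.1 \in nbhd g v & p.2 \in nbhd g v]
     then ~~ g p else g p].

Definition lc_step (T : finType) : rel (graph T) :=
  fun g h => [exists v, h == lc g v].

Definition lc_orbit (T : finType) (g : graph T) : {set graph T} :=
  [set h | connect (@lc_step T) g h].

Definition independent (T : finType) (g : graph T) (S : {set T}) : bool :=
  [forall x in S, forall y in S, (x != y) ==> ~~ adj g x y].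

Definition clique (T : finType) (g : graph T) (S : {set T}) : bool :=
  [forall x in S, forall y in S, (x != y) ==> adj g x y].

Definition alpha (T : finType) (g : graph T) : nat :=
  \max_(S : {set T} | independent g S) #|S|.

Definition lambda (T : finType) (g : graph T) : nat :=
  \max_(h in lc_orbit g) alpha h.

(* Main.v *)
Require Import Defs.
From mathcomp Require Import all_boot.

Theorem mainTheorem3 (T : finType) (g : graph T) (k : nat) :
  simple g -> 1 <= k ->
  (exists2 h, h \in lc_orbit g &
     exists S : {set T}, clique h S /\ #|S| = k) ->
  k - 1 <= lambda g.
Proof.
move=> _ k1 [h hin [S [cS cardS]]].
have [v vS] : exists v, v \in S.
  apply/set0Pn; rewrite -card_gt0 cardS; exact: k1.
set h' := lc h v.
have h'in : h' \in lc_orbit g.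
  move: hin; rewrite !inE => hc; apply: (connect_trans hc).
  apply: connect1; apply/existsP; exists v; exact: eqxx.
have ind : independent h' (S :\ v).
  apply/forallP => x; apply/implyP => /setD1P [xv xS].
  apply/forallP => y; apply/implyP => /setD1P [yv yS].
  apply/implyP => xy.
  have hvx : adj h v x by move/forallP: cS => /(_ v) /implyP /(_ vS)
      /forallP /(_ x) /implyP /(_ xS) /implyP; apply; rewrite eq_sym.
  have hvy : adj h v y by move/forallP: cS => /(_ v) /implyP /(_ vS)
      /forallP /(_ y) /implyP /(_ yS) /implyP; apply; rewrite eq_sym.
  have hxy : adj h x y by move/forallP: cS => /(_ x) /implyP /(_ xS)
      /forallP /(_ y) /implyP /(_ yS) /implyP; apply.
  rewrite /adj /h' /lc ffunE /= xy !inE hvx hvy /=.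
  by move: hxy; rewrite /adj => ->.
have : #|S :\ v| = k - 1 by by rewrite -cardS (cardsD1 v S) vS add1n subn1.
move=> <-.
apply: (leq_trans _ (leq_bigmax_cond _ h'in)).
rewrite /alpha; exact: (@leq_bigmax_cond _ (independent h') (fun S0 : {set T} => #|S0|) _ ind).
Qed.
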